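(* Let $p$ be a prime number and let $d$ be a positive integer dividing $p^n+1$ for some positive integer $n$. Then: (i) there is a positive integer $k$ such that $v_2(\ell_p(r))=k$ for every odd prime factor $r$ of $d$; (ii) if $p>2$ and $k=1$, then $v_2(d)\le v_2(p+1)$, while if $p>2$ and $k>1$, then $v_2(d)\le 1$.
   Context: For coprime integers $a,b$ with $b>0$, $\ell_a(b)$ denotes the multiplicative order of $a$ modulo $b$. For a prime $l$ and positive integer $n$, $v_l(n)$ denotes the exponent of $l$ in the prime factorization of $n$. *)

(* Defs.v *)
From mathcomp Require Import all_boot.

(* Multiplicative order of a modulo b (meaningful for coprime a, b with b > 0):
   the least k >= 1 with a^k = 1 (mod b).  For coprime a, b > 0 this k is
   <= totient b <= b, so searching k in 1..b suffices. *)
Definition mult_order (a b : nat) : nat :=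
  (find (fun k => a ^ k.+1 == 1 %[mod b]) (iota 0 b)).+1.

(* Main.v *)
Require Import Defs.
From mathcomp Require Import all_boot zify.

Lemma fermat_coprime a r : prime r -> coprime a r -> a ^ r.-1 = 1 %[mod r].
Proof.
move=> pr co.
have r1 : 1 < r by apply: prime_gt1.
have := fermat_little a pr.
rewrite -{1}(prednK (ltnW r1)) expnS.
rewrite -[X in _ = X %[mod _] -> _](muln1 a) => /eqP; rewrite eqn_mod_dvd; last first.
  case: a co => [|a] //= _; by rewrite leq_pmul2l // expn_gt0.
rewrite -mulnBr Gauss_dvdr; last by rewrite coprime_sym.
rewrite -eqn_mod_dvd; first by move/eqP.
case: a co => [|a] //=; last by rewrite expn_gt0.
rewrite /coprime gcd0n => /eqP r1'; by rewrite r1' in r1.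
Qed.

Lemma order_spec a r : prime r -> coprime a r ->
  [/\ 0 < mult_order a r, a ^ mult_order a r = 1 %[mod r] &
      forall j, 0 < j < mult_order a r -> a ^ j != 1 %[mod r]].
Proof.
move=> pr co; rewrite /mult_order.
have r1 : 1 < r by apply: prime_gt1.
set P := (fun k => a ^ k.+1 == 1 %[mod r]).
have hs : has P (iota 0 r).
  apply/hasP; exists r.-2.
    by rewrite mem_iota /= add0n; case: (r) r1 => [|[|r']].
  rewrite /P; have := @fermat_coprime a r pr co.
  by case: (r) r1 => [|[|r']] //= _ ->.
have fl : find P (iota 0 r) < r by rewrite -[X in _ < X](size_iota 0 r) -has_find.
split => //.
  have := nth_find 0 hs; rewrite nth_iota // add0n.
  by move/eqP.
move=> j /andP [j0 jl].
have := @before_find _ 0 P (iota 0 r) j.-1.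
rewrite nth_iota; last by apply: ltn_trans fl; rewrite -ltnS prednK.
rewrite add0n /P prednK //.
move=> H; rewrite H //; by rewrite -ltnS prednK.
Qed.

Lemma order_dvd a r m : prime r -> coprime a r -> a ^ m = 1 %[mod r] ->
  mult_order a r %| m.
Proof.
move=> pr co H.
have [t0 ht hmin] := @order_spec a r pr co.

set t := mult_order a r in t0 ht hmin *.
rewrite (divn_eq m t) expnD [_ %/ _ * _]mulnC expnM in H.
have H1 : (a ^ t) ^ (m %/ t) = 1 %[mod r].
  by rewrite -modnXm ht modnXm exp1n.
have H2 : a ^ (m %% t) = 1 %[mod r].
  by rewrite -modnMml H1 modnMml mul1n in H.
apply/negPn/negP => nd.
have := hmin (m %% t).
rewrite ltn_pmod // andbT lt0n.
have -> : (m %% t != 0) by [].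
by rewrite H2 eqxx => /(_ isT).
Qed.

Lemma logn_key t n : 0 < n -> t %| n.*2 -> ~~ (t %| n) ->
  logn 2 t = (logn 2 n).+1.
Proof.
move=> n0 d2 nd.
have t0 : 0 < t by apply: dvdn_gt0 d2; rewrite double_gt0.
have [u cu ht] := pfactor_coprime (isT : prime 2) t0.
apply/eqP; rewrite eqn_leq; apply/andP; split.
  have h2 : 0 < n.*2 by rewrite double_gt0.
  have := @dvdn_leq_log 2 t n.*2 h2 d2.
  by rewrite -mul2n lognM // (@pfactorK 2 1).
rewrite ltnNge; apply/negP => hb.
apply/negP: nd; apply/negPn.
rewrite ht Gauss_dvd; last by rewrite coprimeXr // coprime_sym.
apply/andP; split; last by rewrite pfactor_dvdn.
have : u %| n.*2 by apply: dvdn_trans d2; rewrite ht dvdn_mulr.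
by rewrite -mul2n Gauss_dvdr // coprime_sym.
Qed.

Lemma odd_case p m : 0 < p -> odd p -> exists2 Q, odd Q & p ^ m.*2.+1 + 1 = (p+1) * Q.
Proof.
move=> p0 op; elim: m => [|m [Q oQ h]]; first by exists 1; rewrite ?muln1.
exists (p*(p*Q) - p + 1).
  rewrite oddD oddB; last by rewrite leq_pmulr // muln_gt0 p0 /= odd_gt0.
  by rewrite !oddM op oQ.
have Q0 : 0 < Q by apply: odd_gt0.
rewrite doubleS 2!expnS.
move: h; set X := p ^ _; move=> h.
clearbody X; clear op oQ; move: p0 Q0 h; clear; move=> p0 Q0 h. nia.
Qed.

Lemma v2_odd p n : 0 < p -> odd p -> odd n -> logn 2 (p ^ n + 1) = logn 2 (p + 1).
Proof.
move=> p0 op on.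
have [Q oQ h] := odd_case p n./2 p0 op.
rewrite -[n]odd_double_half on /= add1n h lognM ?addn1 //; last by apply: odd_gt0.
by rewrite (logn_coprime (m:=Q)) ?addn0 // prime_coprime // dvdn2 oQ.
Qed.

Lemma logn22 : logn 2 2 = 1.
Proof. by rewrite -{2}(expn1 2) pfactorK. Qed.

Lemma v2_even p m : odd p -> logn 2 (p ^ m.*2 + 1) = 1.
Proof.
move=> op.
have ox : odd (p ^ m) by rewrite oddX op orbT.
have [y hy] : exists y, p ^ m = y.*2.+1.
  by exists (p^m)./2; rewrite -{1}(odd_double_half (p^m)) ox.
have -> : p ^ m.*2 + 1 = 2 * (2 * (y * y + y) + 1).
  rewrite -mul2n mulnC expnM hy -!mul2n. nia.
rewrite lognM //; last by rewrite addn1.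
rewrite logn22 (@logn_coprime 2 (2*(y*y+y)+1)) // prime_coprime //.
by rewrite dvdn2 oddD oddM.
Qed.

Lemma odd_of_prime p : prime p -> 2 < p -> odd p.
Proof.
move=> pp p2; apply/negPn/negP => ev.
have : 2 %| p by rewrite dvdn2.
by rewrite dvdn_prime2 // => /eqP ep; rewrite -ep in p2.
Qed.

Theorem lemma1 (p d n : nat) :
  prime p -> 0 < d -> 0 < n -> d %| p ^ n + 1 ->
  exists k : nat,
    0 < k /\
    (forall r : nat, prime r -> odd r -> r %| d -> logn 2 (mult_order p r) = k) /\
    (2 < p -> (k = 1 -> logn 2 d <= logn 2 (p + 1)) /\
              (1 < k -> logn 2 d <= 1)).
Proof.
move=> pp d0 n0 dd.
exists (logn 2 n).+1; split => //; split.
  move=> r pr or rd.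
  have rn : r %| p ^ n + 1 := dvdn_trans rd dd.
  have co : coprime p r.
    rewrite coprime_sym prime_coprime //; apply/negP => rp.
    have : r %| 1 by rewrite -(dvdn_addr _ (dvdn_exp n0 rp)).
    by rewrite dvdn1 => /eqP r1; rewrite r1 in pr.
  apply: logn_key => //.
    apply: order_dvd => //.
    have [c hc] := dvdnP rn.
    have X0 : 0 < p ^ n by rewrite expn_gt0 prime_gt0.
    move: hc X0; rewrite -muln2 expnM; set X := p ^ n => hc X0.
    have -> : X ^ 2 = c * (X - 1) * r + 1.
      clearbody X; clear -hc X0. rewrite expnS expn1. nia.
    by rewrite modnMDl.
  apply/negP => /dvdnP [q hq].
  have h1 : p ^ n = 1 %[mod r].
    have [_ ht _] := @order_spec p r pr co.
    by rewrite hq mulnC expnM -modnXm ht modnXm exp1n.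
  have : r %| 2.
    move: rn; rewrite /dvdn -modnDml h1 modnDml //.
  by rewrite dvdn_prime2 // => /eqP r2; rewrite r2 in or.
move=> p2.
have op := odd_of_prime p pp p2.
have hle : logn 2 d <= logn 2 (p ^ n + 1) by apply: dvdn_leq_log; rewrite // addn1.
split.
  case=> l0.
  have on : odd n.
    apply/negPn/negP => ev.
    have : 2 ^ 1 %| n by rewrite expn1 dvdn2.
    by rewrite pfactor_dvdn // l0.
  by rewrite -(v2_odd p n (prime_gt0 pp) op on).
rewrite ltnS => l1.
have : 2 ^ 1 %| n by rewrite pfactor_dvdn.
rewrite expn1 dvdn2 => ev.
move: hle; rewrite -[n]odd_double_half (negbTE ev) add0n.
by rewrite v2_even.
Qed.
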